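(* Let $q$ be a power of $2$. For $i=1,\dots,k$, let $b_i,\delta\in\mathbb{F}_q^*$ and let $s_i$ be positive integers. Then the polynomial $$P(x)=\sum_{i=1}^k b_i(x^q+x+\delta)^{s_i}+x$$ is an involution over $\mathbb{F}_{q^2}$.
   Context: A polynomial $P$ is an involution over $\mathbb{F}_{q^2}$ if it is a permutation polynomial of $\mathbb{F}_{q^2}$ equal to its own compositional inverse, i.e. $P(P(c))=c$ for all $c\in\mathbb{F}_{q^2}$. *)

(* Defs.v *)
From HB Require Import structures.
From mathcomp Require Import all_boot all_order all_algebra all_field.
Set Implicit Arguments. Unset Strict Implicit. Unset Printing Implicit Defensive.
Import GRing.Theory.
Local Open Scope ring_scope.

Definition is_involution (F : finFieldType) (p : {poly F}) : Prop :=
  bijective (fun c : F => p.[c]) /\ forall c : F, p.[p.[c]] = c.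

Definition Ppoly (F : finFieldType) (q k : nat) (b : 'I_k -> F) (s : 'I_k -> nat)
  (delta : F) : {poly F} :=
  \sum_(i < k) b i *: ('X^q + 'X + delta%:P) ^+ (s i) + 'X.

(* Main.v *)
Require Import Defs.
From HB Require Import structures.
From mathcomp Require Import all_boot all_order all_algebra all_field.
Import GRing.Theory.
Local Open Scope ring_scope.

Lemma frob2 (F : fieldType) (h2 : 2%N \in [pchar F]) (m : nat) (x y : F) :
  (x + y) ^+ (2 ^ m) = x ^+ (2 ^ m) + y ^+ (2 ^ m).
Proof.
elim: m => [|m IH]; first by rewrite !expr1.
rewrite expnSr !exprM IH sqrrD mulrn_pchar ?addr0 //.
Qed.

Theorem theorem3p2 (F : finFieldType) (q : nat)
  (hq2 : exists m : nat, q = (2 ^ m)%N)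
  (hcard : #|F| = (q ^ 2)%N)
  (k : nat) (b : 'I_k -> F) (s : 'I_k -> nat) (delta : F)
  (hb : forall i, b i != 0 /\ b i ^+ q = b i)
  (hdelta : delta != 0 /\ delta ^+ q = delta)
  (hs : forall i, (0 < s i)%N) :
  is_involution (Ppoly q b s delta).
Proof.
case: hq2 => m qE.
have h2 : 2%N \in [pchar F].
  by apply: (@card_finPcharP _ _ (2 * m)) => //; rewrite hcard qE -expnM mulnC.
have qpos : (0 < q)%N by rewrite qE expn_gt0.
have fD : forall x y : F, (x + y) ^+ q = x ^+ q + y ^+ q by move=> x y; rewrite qE frob2.
have fF : forall x : F, x ^+ q ^+ q = x by move=> x; rewrite -exprM -[in RHS](expf_card x) hcard expnS expn1.
have c2 : forall x : F, x + x = 0 by move=> x; rewrite -mulr2n mulrn_pchar.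
pose G := fun t : F => \sum_(i < k) b i * t ^+ s i.
have hP : forall c, (Ppoly q b s delta).[c] = G (c ^+ q + c + delta) + c.
  move=> c; rewrite /Ppoly hornerD hornerX horner_sum; congr (_ + _).
  apply: eq_bigr => i _; rewrite hornerZ horner_exp !hornerD hornerXn hornerX hornerC //.
have hG : forall t, t ^+ q = t -> G t ^+ q = G t.
  move=> t ht; rewrite /G; apply: (big_ind (fun z : F => z ^+ q = z)).
  - by rewrite expr0n eqn0Ngt qpos.
  - by move=> x y hx hy; rewrite fD hx hy.
  - by move=> i _; rewrite exprMn (proj2 (hb i)) exprAC ht.
have hT : forall c : F, (c ^+ q + c + delta) ^+ q = c ^+ q + c + delta.
  by move=> c; rewrite !fD fF (proj2 hdelta) (addrC c).
have inv : forall c, (Ppoly q b s delta).[(Ppoly q b s delta).[c]] = c.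
  move=> c; rewrite !hP.
  set t := c ^+ q + c + delta.
  have -> : (G t + c) ^+ q + (G t + c) + delta = t.
    rewrite fD hG ?hT // /t.
    by rewrite addrACA c2 add0r.
  by rewrite addrA c2 add0r.
split=> //; exists (fun c => (Ppoly q b s delta).[c]) => c; exact: inv.
Qed.
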